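(* Let $A\in\mathbb{R}^{n\times d}$, $k\ge1$, and let $B\in\mathbb{R}^{n\times m}$ satisfy $$BB^T\preceq AA^T\preceq BB^T+\tfrac12\cdot\tfrac{\|A-A_k\|_F^2}{k}I_n .$$ For each column $a_i$ of $A$ define $\tilde\tau_i=a_i^T\Big(BB^T+\frac{\|A\|_F^2-\|B_k\|_F^2}{k}I_n\Big)^+a_i$. Then for all $i$, $$\tfrac12\bar\tau_i(A)\le\tilde\tau_i\le2\bar\tau_i(A).$$
   Context: For any matrix $N$, $N_k$ denotes a best rank-$k$ approximation in Frobenius norm, so $\|N_k\|_F^2$ is the sum of the $k$ largest squared singular values of $N$. $^+$ is the Moore–Penrose pseudoinverse and $\preceq$ the Loewner order. Ridge leverage score: $\bar\tau_i(A)=a_i^T\big(AA^T+\frac{\|A-A_k\|_F^2}{k}I_n\big)^+a_i$. *)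

(* Defs.v *)
(* real closed fields (elementarily equivalent to the reals). *)
From HB Require Import structures.
From mathcomp Require Import all_boot all_order all_algebra.
Set Implicit Arguments. Unset Strict Implicit. Unset Printing Implicit Defensive.
Import Order.TTheory GRing.Theory Num.Theory.
Local Open Scope ring_scope.

Definition fnorm2 (R : rcfType) (p q : nat) (M : 'M[R]_(p, q)) : R :=
  \sum_(i < p) \sum_(j < q) (M i j) ^+ 2.

Definition best_rank_approx (R : rcfType) (p q k : nat) (N Nk : 'M[R]_(p, q)) : Prop :=
  (\rank Nk <= k)%N /\
  forall X : 'M[R]_(p, q), (\rank X <= k)%N -> fnorm2 (N - Nk) <= fnorm2 (N - X).

Definition is_pinv (R : rcfType) (n : nat) (M X : 'M[R]_n) : Prop :=
  [/\ M *m X *m M = M, X *m M *m X = X, (M *m X)^T = M *m X & (X *m M)^T = X *m M].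

Definition loewner_le (R : rcfType) (n : nat) (M N : 'M[R]_n) : Prop :=
  forall x : 'cV[R]_n, 0 <= (x^T *m (N - M) *m x) 0 0.

Definition qform (R : rcfType) (n : nat) (X : 'M[R]_n) (a : 'cV[R]_n) : R :=
  (a^T *m X *m a) 0 0.

(* Main.v *)
Require Import Defs.
From HB Require Import structures.
From mathcomp Require Import all_boot all_order all_algebra.
From mathcomp Require Import ring lra.
Import Order.TTheory GRing.Theory Num.Theory.
Local Open Scope ring_scope.
Set Implicit Arguments. Unset Strict Implicit.

Section Aux.
Variable R : rcfType.

Lemma fnorm2_tr p q (M : 'M[R]_(p, q)) : fnorm2 M = \tr (M *m M^T).
Proof.
rewrite /fnorm2 /mxtrace; apply: eq_bigr => i _; rewrite mxE.
by apply: eq_bigr => j _; rewrite !mxE expr2.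
Qed.

Lemma fnorm2_ge0 p q (M : 'M[R]_(p, q)) : 0 <= fnorm2 M.
Proof. by apply: sumr_ge0 => i _; apply: sumr_ge0 => j _; apply: sqr_ge0. Qed.

Lemma fnorm2_eq0 p q (M : 'M[R]_(p, q)) : fnorm2 M = 0 -> M = 0.
Proof.
move/eqP; rewrite psumr_eq0 => [/allP H|i _]; last first.
  by apply: sumr_ge0 => j _; apply: sqr_ge0.
apply/matrixP => i j; rewrite mxE.
have := H i (mem_index_enum _); rewrite /= psumr_eq0 => [/allP H2|]; last first.
  by move=> l _; apply: sqr_ge0.
by have := H2 j (mem_index_enum _); rewrite /= sqrf_eq0 => /eqP.
Qed.

Lemma entry_mul m p q (X : 'M[R]_(m, p)) (Y : 'M[R]_(p, q)) i j :
  (X *m Y) i j = (row i X *m col j Y) 0 0.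
Proof. by rewrite !mxE; apply: eq_bigr => l _; rewrite !mxE. Qed.

Lemma tr_quad_ge0 n p (D : 'M[R]_n) (X : 'M[R]_(n, p)) :
  (forall x : 'cV[R]_n, 0 <= (x^T *m D *m x) 0 0) -> 0 <= \tr (X^T *m D *m X).
Proof.
move=> H; rewrite /mxtrace; apply: sumr_ge0 => j _.
by rewrite entry_mul row_mul -tr_col; apply: H.
Qed.

Lemma fnorm2_pyth n q (Pi : 'M[R]_n) (U V : 'M[R]_(n, q)) :
  Pi^T = Pi -> Pi *m U = 0 -> Pi *m V = V ->
  fnorm2 (U + V) = fnorm2 U + fnorm2 V.
Proof.
move=> PT PU PV.
have cross : \tr (U *m V^T) = 0.
  by rewrite -PV trmx_mul PT mulmxA mxtrace_mulC mulmxA PU !mul0mx mxtrace0.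
rewrite !fnorm2_tr linearD /= mulmxDl !mulmxDr !mxtraceD.
have -> : \tr (V *m U^T) = \tr (U *m V^T).
  by rewrite -mxtrace_tr trmx_mul trmxK.
by rewrite cross addr0 add0r.
Qed.


Lemma proj_exists n q k (X : 'M[R]_(n, q)) : (\rank X <= k)%N ->
  exists Pi : 'M[R]_n, [/\ Pi^T = Pi, Pi *m Pi = Pi, Pi *m X = X,
     \tr Pi <= k%:R & forall p (M : 'M[R]_(n, p)), (\rank (Pi *m M) <= k)%N].
Proof.
move=> rk.
have Wfree := row_base_free X^T.
have XW : (X^T <= row_base X^T)%MS by rewrite eq_row_base submx_refl.
have rr : (\rank X^T <= k)%N by rewrite mxrank_tr.
move: (row_base X^T) Wfree XW rr; move: (\rank X^T) => r W Wfree XW rr.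
set G := W *m W^T.
have GT : G^T = G by rewrite /G trmx_mul trmxK.
have Gu : G \in unitmx.
  rewrite -row_free_unit -kermx_eq0; apply/eqP.
  set K := kermx G.
  have KG : K *m G = 0 by apply: mulmx_ker.
  have KW : K *m W = 0.
    apply: fnorm2_eq0; rewrite fnorm2_tr trmx_mul mulmxA -(mulmxA K) -/G KG.
    by rewrite mul0mx mxtrace0.
  by apply/eqP; rewrite -(mulmx_free_eq0 _ Wfree) KW.
case/submxP: XW => D XD.
have XD' : X = W^T *m D^T by rewrite -trmx_mul -XD trmxK.
exists (W^T *m invmx G *m W); split.
- by rewrite !trmx_mul trmxK trmx_inv GT mulmxA.
- rewrite -!mulmxA (mulmxA W) -/G (mulmxA G) mulmxV // mul1mx.
  by rewrite mulmxA.
- by rewrite XD' -!mulmxA (mulmxA W) -/G (mulmxA _ G) mulVmx // mul1mx.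
- rewrite -mulmxA mxtrace_mulC -mulmxA -/G mulVmx // mxtrace1.
  by rewrite ler_nat.
- move=> p M; rewrite -!mulmxA; apply: leq_trans (mxrankM_maxl _ _) _.
  by apply: leq_trans (rank_leq_col _) _.
Qed.


Lemma fnorm2_projM n q (Pi : 'M[R]_n) (M : 'M[R]_(n, q)) :
  Pi^T = Pi -> Pi *m Pi = Pi -> fnorm2 (Pi *m M) = \tr (Pi *m (M *m M^T)).
Proof.
move=> PT PP; rewrite fnorm2_tr trmx_mul PT mulmxA.
by rewrite [LHS]mxtrace_mulC -mulmxA (mulmxA Pi Pi M) PP [LHS]mxtrace_mulC.
Qed.

Lemma fnorm2_projB n q (Pi : 'M[R]_n) (M : 'M[R]_(n, q)) :
  Pi^T = Pi -> Pi *m Pi = Pi ->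
  fnorm2 (M - Pi *m M) = fnorm2 M - \tr (Pi *m (M *m M^T)).
Proof.
move=> PT PP; rewrite -(fnorm2_projM M PT PP).
have h1 : Pi *m (M - Pi *m M) = 0 by rewrite mulmxBr mulmxA PP subrr.
have h2 : Pi *m (Pi *m M) = Pi *m M by rewrite mulmxA PP.
have := fnorm2_pyth PT h1 h2; rewrite subrK => ->.
by rewrite addrK.
Qed.

Lemma pyth_split n q (Pi : 'M[R]_n) (M Y : 'M[R]_(n, q)) :
  Pi^T = Pi -> Pi *m Pi = Pi -> Pi *m Y = Y ->
  fnorm2 (M - Y) = fnorm2 (M - Pi *m M) + fnorm2 (Pi *m M - Y).
Proof.
move=> PT PP PY.
have -> : M - Y = (M - Pi *m M) + (Pi *m M - Y) by rewrite addrA subrK.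
rewrite (@fnorm2_pyth _ _ Pi) //.
  by rewrite mulmxBr mulmxA PP subrr.
by rewrite mulmxBr mulmxA PP PY.
Qed.

Lemma best_proj n q k (Pi : 'M[R]_n) (M Mk : 'M[R]_(n, q)) :
  best_rank_approx k M Mk -> Pi^T = Pi -> Pi *m Pi = Pi -> Pi *m Mk = Mk ->
  (\rank (Pi *m M) <= k)%N -> Mk = Pi *m M.
Proof.
move=> [_ opt] PT PP PY rk.
have := opt _ rk; rewrite (pyth_split M PT PP PY) -lerBrDl subrr => H.
have H0 : fnorm2 (Pi *m M - Mk) = 0.
  by apply/eqP; rewrite eq_le H fnorm2_ge0.
by apply/eqP; rewrite eq_sym -subr_eq0; apply/eqP; apply: fnorm2_eq0.
Qed.

Lemma tr_loewner n (Pi M N : 'M[R]_n) :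
  loewner_le M N -> Pi^T = Pi -> Pi *m Pi = Pi ->
  \tr (Pi *m M) <= \tr (Pi *m N).
Proof.
move=> H PT PP; rewrite -subr_ge0.
have -> : \tr (Pi *m N) - \tr (Pi *m M) = \tr (Pi *m (N - M)).
  by rewrite mulmxBr linearB.
rewrite -{1}PP -mulmxA [X in 0 <= X]mxtrace_mulC -{1}PT.
exact: tr_quad_ge0.
Qed.


Lemma e_add (A B : 'M[R]_1) : (A + B) 0 0 = A 0 0 + B 0 0.
Proof. by rewrite mxE. Qed.
Lemma e_opp (A : 'M[R]_1) : (- A) 0 0 = - A 0 0.
Proof. by rewrite mxE. Qed.
Lemma e_scale c (A : 'M[R]_1) : (c *: A) 0 0 = c * A 0 0.
Proof. by rewrite mxE. Qed.
Lemma e_tr (A : 'M[R]_1) : A^T 0 0 = A 0 0.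
Proof. by rewrite mxE. Qed.

Lemma norm2_col p (Y : 'M[R]_(p, 1)) : (Y^T *m Y) 0 0 = fnorm2 Y.
Proof. by rewrite fnorm2_tr mxtrace_mulC /mxtrace big_ord1. Qed.

Lemma qformD n (M N : 'M[R]_n) x : qform (M + N) x = qform M x + qform N x.
Proof. by rewrite /qform mulmxDr mulmxDl e_add. Qed.

Lemma qform_scalar n c (x : 'cV[R]_n) : qform (c%:M) x = c * fnorm2 x.
Proof. by rewrite /qform mul_mx_scalar -scalemxAl e_scale norm2_col. Qed.

Lemma qform_gram n p (A : 'M[R]_(n, p)) x : qform (A *m A^T) x = fnorm2 (A^T *m x).
Proof. by rewrite /qform -norm2_col trmx_mul trmxK !mulmxA. Qed.

Lemma qformZ n (M : 'M[R]_n) c x : qform M (c *: x) = c ^+ 2 * qform M x.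
Proof.
by rewrite /qform linearZ /= linearZ /= -!scalemxAl !e_scale mulrA expr2.
Qed.

Definition PD n (M : 'M[R]_n) := forall x, x != 0 -> 0 < qform M x.

Lemma PD_ge0 n (M : 'M[R]_n) x : PD M -> 0 <= qform M x.
Proof.
move=> H; have [->|/H/ltW //] := eqVneq x 0.
by rewrite /qform mulmx0 mxE.
Qed.

Lemma PD_kill n (M N : 'M[R]_n) : PD M -> N *m M = 0 -> N = 0.
Proof.
move=> H NM; apply/row_matrixP => i; rewrite row0.
apply/eqP; rewrite -trmx_eq0; apply/negPn/negP => /H.
by rewrite /qform trmxK -row_mul NM row0 mul0mx mxE ltxx.
Qed.

Lemma var_pinv n (M X : 'M[R]_n) (a x : 'cV[R]_n) :
  M^T = M -> PD M -> M *m X *m M = M ->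
  2%:R * (a^T *m x) 0 0 - qform M x <= qform X a /\ qform M (X *m a) = qform X a.
Proof.
move=> MT pd MXM.
have MX : M *m X = 1%:M.
  apply/eqP; rewrite -subr_eq0; apply/eqP; apply: (PD_kill pd).
  by rewrite mulmxBl MXM mul1mx subrr.
set y := X *m a.
have My : M *m y = a by rewrite /y mulmxA MX mul1mx.
have qX : qform X a = (a^T *m y) 0 0 by rewrite /qform /y mulmxA.
have sw : forall u v : 'cV[R]_n, (u^T *m v) 0 0 = (v^T *m u) 0 0.
  by move=> u v; rewrite -e_tr trmx_mul trmxK.
have b1 : (x^T *m M *m y) 0 0 = (a^T *m x) 0 0 by rewrite -mulmxA My sw.
have b2 : (y^T *m M *m x) 0 0 = (a^T *m x) 0 0.
  by rewrite -MT -trmx_mul My.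
have qy : qform M y = qform X a by rewrite qX /qform -mulmxA My sw.
split=> //.
have := PD_ge0 (x - y) pd.
rewrite /qform linearB /= linearB /= !mulmxBl !(e_add, e_opp) b1 b2.
rewrite -/(qform M y) qy -/(qform M x) -/(qform X a).
move=> h; lra.
Qed.


Lemma compare_pinv n (M1 M2 X1 X2 : 'M[R]_n) (c : R) (a : 'cV[R]_n) :
  M1^T = M1 -> M2^T = M2 -> PD M1 -> PD M2 ->
  M1 *m X1 *m M1 = M1 -> M2 *m X2 *m M2 = M2 -> 0 < c ->
  (forall x, qform M1 x <= c * qform M2 x) ->
  qform X2 a <= c * qform X1 a.
Proof.
move=> M1T M2T pd1 pd2 e1 e2 c0 H.
set y := X2 *m a.
have [_ q2] := var_pinv a a M2T pd2 e2.
have q2' : qform X2 a = (a^T *m y) 0 0 by rewrite /qform /y mulmxA.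
have [h _] := var_pinv a (c^-1 *: y) M1T pd1 e1.
rewrite -scalemxAr e_scale -q2' qformZ in h.
have := H y; rewrite q2 => Hy.
have cne : c != 0 by rewrite gt_eqF.
set q1 := qform X1 a; set p := qform X2 a; set u := qform M1 y.
have h2 : 2%:R * (c^-1 * p) - c^-1 ^+ 2 * (c * p) <= q1.
  apply: le_trans h; rewrite lerD2l lerN2; apply: ler_wpM2l => //.
  by rewrite exprn_ge0 // invr_ge0 ltW.
have E : 2%:R * (c^-1 * p) - c^-1 ^+ 2 * (c * p) = c^-1 * p by field.
rewrite E in h2.
by rewrite -(ler_pM2l c0) mulrA mulfV // mul1r in h2.
Qed.

Lemma pinv_unique n (M X1 X2 : 'M[R]_n) :
  is_pinv M X1 -> is_pinv M X2 -> X1 = X2.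
Proof.
move=> [a1 b1 c1 d1] [a2 b2 c2 d2].
have MT2 : M^T = M^T *m M *m X2.
  by rewrite -{1}a2 trmx_mul c2 mulmxA.
have MT1 : M^T = X1 *m M *m M^T.
  by rewrite -{1}a1 -mulmxA trmx_mul d1.
have e1 : X1 = X1 *m M *m X2.
  have s1 : X1 = X1 *m X1^T *m M^T by rewrite -mulmxA -trmx_mul c1 mulmxA b1.
  rewrite {1}s1 MT2 !mulmxA -(mulmxA X1 X1^T) -trmx_mul c1 !mulmxA b1.
  done.
have e2 : X2 = X1 *m M *m X2.
  have s2 : X2 = M^T *m X2^T *m X2 by rewrite -trmx_mul d2 b2.
  rewrite {1}s2 MT1 -!mulmxA (mulmxA M^T) -trmx_mul d2 !mulmxA.
  by rewrite -(mulmxA _ X2 M) -(mulmxA _ (X2 *m M)) b2 ?mulmxA.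
by rewrite e1 -e2.
Qed.

Lemma pinv_sym n (M X : 'M[R]_n) : M^T = M -> is_pinv M X -> X^T = X.
Proof.
move=> MT hX; apply: (pinv_unique _ hX); case: hX => [a b c d]; split.
- by apply: trmx_inj; rewrite !trmx_mul trmxK MT mulmxA a.
- by apply: trmx_inj; rewrite !trmx_mul trmxK MT mulmxA b.
- by rewrite trmx_mul trmxK MT -{2}MT -trmx_mul d.
- by rewrite trmx_mul trmxK MT -{2}MT -trmx_mul c.
Qed.

Lemma pinv_ge0 n p (A : 'M[R]_(n, p)) X a :
  is_pinv (A *m A^T) X -> 0 <= qform X a.
Proof.
move=> hX; have XT : X^T = X.
  by apply: pinv_sym hX; rewrite trmx_mul trmxK.
case: hX => [_ b _ _].
set M := A *m A^T in b *.
have E : (X *m a)^T *m M *m (X *m a) = a^T *m X *m a.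
  rewrite trmx_mul XT mulmxA -(mulmxA (a^T *m X) M X) -(mulmxA a^T X (M *m X)).  rewrite (mulmxA X M X) b.
  done.
rewrite /qform -E -/(qform M (X *m a)) /M qform_gram; exact: fnorm2_ge0.
Qed.


Lemma qformB n (M N : 'M[R]_n) x : qform (N - M) x = qform N x - qform M x.
Proof. by rewrite /qform mulmxBr mulmxBl e_add e_opp. Qed.

Lemma scalar0 n : (0 : R)%:M = 0 :> 'M[R]_n.
Proof. by apply/matrixP => i j; rewrite !mxE mul0rn. Qed.

Lemma qform_delta n (D : 'M[R]_n) i j :
  ((delta_mx i (0 : 'I_1) : 'cV[R]_n)^T *m D *m (delta_mx j (0 : 'I_1) : 'cV[R]_n)) 0 0 = D i j.
Proof. by rewrite trmx_delta -rowE -colE !mxE. Qed.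

Lemma qform0_sym n (D : 'M[R]_n) : D^T = D -> (forall x, qform D x = 0) -> D = 0.
Proof.
move=> DT H; apply/matrixP => i j; rewrite mxE.
have := H (delta_mx i 0 + delta_mx j 0).
rewrite /qform linearD /= linearD /= !mulmxDl !e_add !qform_delta.
have := H (delta_mx i 0); rewrite /qform qform_delta => ->.
have := H (delta_mx j 0); rewrite /qform qform_delta => ->.
have Dji : D j i = D i j by rewrite -{1}DT mxE.
rewrite Dji => h; lra.
Qed.

Lemma sym_gram n p (A : 'M[R]_(n, p)) c : (A *m A^T + c%:M)^T = A *m A^T + c%:M.
Proof. by rewrite linearD /= trmx_mul trmxK tr_scalar_mx. Qed.

Lemma fnorm2_pos p q (x : 'M[R]_(p, q)) : x != 0 -> 0 < fnorm2 x.
Proof.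
move=> nz; rewrite lt_def fnorm2_ge0 andbT; apply/eqP => /fnorm2_eq0 h.
by rewrite h eqxx in nz.
Qed.

End Aux.

Unset Implicit Arguments.

Theorem mainTheorem11 (R : rcfType) (n d m k : nat)
  (A : 'M[R]_(n, d)) (B : 'M[R]_(n, m))
  (Ak : 'M[R]_(n, d)) (Bk : 'M[R]_(n, m))
  (P Q : 'M[R]_n) :
  (1 <= k)%N ->
  best_rank_approx k A Ak ->
  best_rank_approx k B Bk ->
  loewner_le (B *m B^T) (A *m A^T) ->
  loewner_le (A *m A^T)
    (B *m B^T + ((2%:R)^-1 * (fnorm2 (A - Ak) / k%:R))%:M) ->
  is_pinv (A *m A^T + (fnorm2 (A - Ak) / k%:R)%:M) P ->
  is_pinv (B *m B^T + ((fnorm2 A - fnorm2 Bk) / k%:R)%:M) Q ->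
  forall i : 'I_d,
    (2%:R)^-1 * qform P (col i A) <= qform Q (col i A) /\
    qform Q (col i A) <= 2%:R * qform P (col i A).
Proof.
set eA := fnorm2 (A - Ak).
set lam := eA / k%:R.
set lamB := (fnorm2 A - fnorm2 Bk) / k%:R.
move=> k1 hA hB L1 L2 hP hQ i.
set a := col i A.
have kpos : 0 < k%:R :> R by rewrite ltr0n.
have [rkA optA] := hA; have [rkB optB] := hB.
have [PA [PAT PAP PAX PAtr PArk]] := proj_exists rkA.
have [PB [PBT PBP PBX PBtr PBrk]] := proj_exists rkB.
have AkE := best_proj hA PAT PAP PAX (PArk _ A).
have BkE := best_proj hB PBT PBP PBX (PBrk _ B).
have F1 : fnorm2 Bk = \tr (PB *m (B *m B^T)) by rewrite BkE fnorm2_projM.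
have F2 : eA = fnorm2 A - \tr (PA *m (A *m A^T)) by rewrite /eA AkE fnorm2_projB.
have F3 := tr_loewner L1 PBT PBP.
have F4 : eA <= fnorm2 A - \tr (PB *m (A *m A^T)).
  by rewrite -fnorm2_projB //; apply: optA.
have F5 := tr_loewner L2 PAT PAP.
rewrite mulmxDr mxtraceD mul_mx_scalar mxtraceZ in F5.
have F6 : fnorm2 B - \tr (PB *m (B *m B^T)) <= fnorm2 B - \tr (PA *m (B *m B^T)).
  by rewrite -!fnorm2_projB // -BkE; apply: optB.
have eA0 : 0 <= eA by apply: fnorm2_ge0.
have lam0 : 0 <= lam by rewrite divr_ge0 // ltW.
have trA0 : 0 <= \tr PA.
  by rewrite -PAP -{2}PAT -fnorm2_tr fnorm2_ge0.
have keA : lam * k%:R = eA by rewrite /lam divfK // gt_eqF.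
have klB : lamB * k%:R = fnorm2 A - fnorm2 Bk by rewrite /lamB divfK // gt_eqF.
have lo : lam <= lamB.
  by rewrite -(ler_pM2r kpos) keA klB; lra.
have hi : lamB <= 3%:R / 2%:R * lam.
  rewrite -(ler_pM2r kpos) klB.
  have h : 2%:R^-1 * lam * \tr PA <= 2%:R^-1 * eA.
    have E2 : 2%:R^-1 * lam * k%:R = 2%:R^-1 * eA by rewrite -mulrA keA.
    rewrite -E2; apply: ler_wpM2l PAtr.
    by rewrite mulr_ge0 // invr_ge0 ler0n.
  have E : 3%:R / 2%:R * lam * k%:R = eA + 2%:R^-1 * eA by rewrite -[in X in _ = X]keA; field.
  rewrite E; lra.
clearbody lam lamB eA.
have qAge x : 0 <= qform (A *m A^T) x by rewrite qform_gram fnorm2_ge0.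
have qBge x : 0 <= qform (B *m B^T) x by rewrite qform_gram fnorm2_ge0.
have H1 x : qform (B *m B^T) x <= qform (A *m A^T) x.
  by rewrite -subr_ge0 -qformB; apply: L1.
have H2 x : qform (A *m A^T) x <= qform (B *m B^T) x + 2%:R^-1 * lam * fnorm2 x.
  have := L2 x; rewrite -/(qform _ x) qformB qformD qform_scalar => h; lra.
have [lz|lp] : lam = 0 \/ 0 < lam.
  by move: lam0; rewrite le_eqVlt => /orP [/eqP<-|->]; [left|right].
- have lBz : lamB = 0 by apply/eqP; rewrite eq_le; apply/andP; split; lra.
  have AB : A *m A^T = B *m B^T.
    apply/eqP; rewrite -subr_eq0; apply/eqP; apply: qform0_sym.
      by rewrite linearB /= !trmx_mul !trmxK.
    move=> x; rewrite qformB; have := H1 x; have := H2 x; rewrite lz => h h'.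
    lra.
  rewrite lz scalar0 addr0 in hP; rewrite lBz scalar0 addr0 -AB in hQ.
  have PQ := pinv_unique hP hQ; rewrite -PQ.
  have := pinv_ge0 a hP; lra.
- have MAT := sym_gram A lam; have MBT := sym_gram B lamB.
  have qMA x : qform (A *m A^T + lam%:M) x = qform (A *m A^T) x + lam * fnorm2 x.
    by rewrite qformD qform_scalar.
  have qMB x : qform (B *m B^T + lamB%:M) x = qform (B *m B^T) x + lamB * fnorm2 x.
    by rewrite qformD qform_scalar.
  have p1 (x : 'cV[R]_n) : lam * fnorm2 x <= lamB * fnorm2 x by apply: ler_wpM2r => //; apply: fnorm2_ge0.
  have p2 (x : 'cV[R]_n) : lamB * fnorm2 x <= 3%:R / 2%:R * lam * fnorm2 x.
    by apply: ler_wpM2r => //; apply: fnorm2_ge0.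
  have p3 (x : 'cV[R]_n) : 0 <= lam * fnorm2 x by rewrite mulr_ge0 // fnorm2_ge0.
  have pdA : PD (A *m A^T + lam%:M).
    move=> x nz; rewrite qMA; have := mulr_gt0 lp (fnorm2_pos nz); have := qAge x; lra.
  have pdB : PD (B *m B^T + lamB%:M).
    move=> x nz; rewrite qMB; have := mulr_gt0 lp (fnorm2_pos nz).
    have := H2 x; have := qAge x; have := p1 x; lra.
  case: hP => [eP _ _ _]; case: hQ => [eQ _ _ _].
  have two : 0 < 2%:R :> R by rewrite ltr0n.
  split.
  + have := compare_pinv a MBT MAT pdB pdA eQ eP two.
    have : forall x, qform (B *m B^T + lamB%:M) x <= 2%:R * qform (A *m A^T + lam%:M) x.
      move=> x; rewrite qMA qMB; have := H1 x; have := qAge x; have := p2 x; have := p3 x.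
      lra.
    move=> h /(_ h) h'; lra.
  + apply: (compare_pinv a MAT MBT pdA pdB eP eQ two) => x.
    rewrite qMA qMB; have := H2 x; have := qBge x; have := p1 x; have := p3 x.
    lra.
Qed.
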